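(* Let $k\ge1$, let $A_k$ be the matrix defined below, and let $\mathbf{b}=(\mathbf{w}_1,\mathbf{w}_2,c)^{\mathsf T}\in\mathbb{Z}^{2k+1}$ ($\mathbf{w}_1,\mathbf{w}_2\in\mathbb{Z}^k$, $c\in\mathbb{Z}$) with $\mathcal{F}_{A_k}(\mathbf{b})\ne\emptyset$. For every integer $s\in[l(\mathbf{b}),u(\mathbf{b})]$, the minimal degree and the vertex-connectivity of the induced subgraph of $G_{A_k,\mathbf{b},\mathcal{G}(A_k)}$ on $C_s(\mathbf{b})$ both equal $$|\mathrm{supp}(\mathbf{w}_1+s\mathbf{1}_k)|+|\mathrm{supp}(\mathbf{w}_2+(c-s)\mathbf{1}_k)|.$$
   Context: $I_k$ is the $k\times k$ identity, $\mathbf{1}_k$ the all-ones vector in $\mathbb{Z}^k$. Define $$A_k=\begin{pmatrix} I_k & I_k & 0 & 0 & -\mathbf{1}_k & \mathbf{0}\\ 0&0&I_k&I_k&\mathbf{0}&-\mathbf{1}_k\\ 0&0&0&0&1&1\end{pmatrix}\in\mathbb{Z}^{(2k+1)\times(4k+2)}$$ (zero blocks of appropriate sizes; last two columns are single columns). Fiber: $\mathcal{F}_A(\mathbf{b})=\{\mathbf{u}\in\mathbb{Z}^n_{\ge0}:A\mathbf{u}=\mathbf{b}\}$; for $\mathcal{M}\subset\mathbb{Z}^n$, $G_{A,\mathbf{b},\mathcal{M}}$ is the graph on $\mathcal{F}_A(\mathbf{b})$ with distinct $\mathbf{u},\mathbf{v}$ adjacent iff $\mathbf{u}-\mathbf{v}\in\pm\mathcal{M}$.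 The Graver basis $\mathcal{G}(A)$ is the set of $\sqsubseteq$-minimal elements of $(\ker A\cap\mathbb{Z}^n)\setminus\{\mathbf{0}\}$, where $\mathbf{u}\sqsubseteq\mathbf{v}$ iff $u_iv_i\ge0$ and $|u_i|\le|v_i|$ for all $i$. $\mathrm{supp}(\mathbf{w})$ is the set of indices of nonzero entries. $\mathbf{w}^-$ has entries $\max(-w_i,0)$; $l(\mathbf{b}):=\|\mathbf{w}_1^-\|_\infty$, $u(\mathbf{b}):=c-\|\mathbf{w}_2^-\|_\infty$; $C_s(\mathbf{b}):=\{\mathbf{u}\in\mathcal{F}_{A_k}(\mathbf{b}):u_{4k+1}=s\}$. A graph $G=(V,E)$ is $\ell$-vertex-connected if $|V|>\ell$ and deleting any fewer than $\ell$ vertices leaves it connected; the vertex-connectivity is the largest such $\ell$. *)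

(* Defs.v *)
From HB Require Import structures.
From mathcomp Require Import all_boot all_order all_algebra.
From Stdlib Require Import Relations.
Set Implicit Arguments. Unset Strict Implicit. Unset Printing Implicit Defensive.
Import Order.TTheory GRing.Theory Num.Theory.
Local Open Scope ring_scope.

Definition ncols (k : nat) : nat := (k + k + k + k + 1 + 1)%N.
Definition nrows (k : nat) : nat := (k + k + 1)%N.

Definition A_mat (k : nat) : 'M[int]_(k + k + 1, k + k + k + k + 1 + 1) :=
  col_mx
    (col_mx
       (row_mx (row_mx (row_mx (row_mx (row_mx (1%:M : 'M[int]_k) 1%:M) 0) 0)
                 (- const_mx 1)) 0)
       (row_mx (row_mx (row_mx (row_mx (row_mx (0 : 'M[int]_k) 0) 1%:M) 1%:M) 0)
                 (- const_mx 1)))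
    (row_mx (row_mx (row_mx (row_mx (row_mx (0 : 'M[int]_(1, k)) 0) 0) 0)
              (const_mx 1)) (const_mx 1)).

Definition b_vec (k : nat) (w1 w2 : 'cV[int]_k) (c : int) : 'cV[int]_(k + k + 1) :=
  col_mx (col_mx w1 w2) (const_mx c).

Definition in_fiber (m n : nat) (A : 'M[int]_(m, n)) (b : 'cV[int]_m) (u : 'cV[int]_n)
  : Prop := (forall i, 0 <= u i 0) /\ A *m u = b.

Definition conf_le (n : nat) (u v : 'cV[int]_n) : Prop :=
  forall i, 0 <= u i 0 * v i 0 /\ `|u i 0| <= `|v i 0|.

Definition in_graver (m n : nat) (A : 'M[int]_(m, n)) (g : 'cV[int]_n) : Prop :=
  A *m g = 0 /\ g <> 0 /\
  (forall h : 'cV[int]_n, A *m h = 0 -> h <> 0 -> conf_le h g -> h = g).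

Definition fiber_adj (n : nat) (M : 'cV[int]_n -> Prop) (u v : 'cV[int]_n) : Prop :=
  u <> v /\ (M (u - v) \/ M (- (u - v))).

Definition has_degree (T : eqType) (V : T -> Prop) (adj : T -> T -> Prop) (v : T) (d : nat)
  : Prop :=
  exists s : seq T, uniq s /\ size s = d /\
    (forall w, w \in s <-> (V w /\ adj v w)).

Definition min_degree_eq (T : eqType) (V : T -> Prop) (adj : T -> T -> Prop) (d : nat)
  : Prop :=
  (exists v, V v /\ has_degree V adj v d) /\
  (forall v, V v -> exists d', has_degree V adj v d' /\ (d <= d')%N).

Definition connected_on (T : Type) (W : T -> Prop) (adj : T -> T -> Prop) : Prop :=
  forall u v, W u -> W v ->
    clos_refl_trans T (fun a b => W a /\ W b /\ adj a b) u v.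

Definition vconnected (T : eqType) (V : T -> Prop) (adj : T -> T -> Prop) (l : nat)
  : Prop :=
  (exists s : seq T, uniq s /\ (l < size s)%N /\ (forall x, x \in s -> V x)) /\
  (forall S : seq T, (size S < l)%N ->
     connected_on (fun x => V x /\ x \notin S) adj).

Definition vconnectivity_eq (T : eqType) (V : T -> Prop) (adj : T -> T -> Prop) (l : nat)
  : Prop :=
  vconnected V adj l /\ (forall m, vconnected V adj m -> (m <= l)%N).

Definition neg_inf_norm (k : nat) (w : 'cV[int]_k) : int :=
  \big[Num.max/0]_(i < k) Num.max (- w i 0) 0.

Definition l_b (k : nat) (w1 : 'cV[int]_k) : int := neg_inf_norm w1.
Definition u_b (k : nat) (w2 : 'cV[int]_k) (c : int) : int := c - neg_inf_norm w2.

(* The coordinate u_{4k+1} (1-based), i.e. the first of the two last columns. *)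
Definition coord_p (k : nat) (u : 'cV[int]_(k + k + k + k + 1 + 1)) : int :=
  (dsubmx (usubmx u)) 0 0.

Definition C_s (k : nat) (w1 w2 : 'cV[int]_k) (c s : int)
  (u : 'cV[int]_(k + k + k + k + 1 + 1)) : Prop :=
  in_fiber (A_mat k) (b_vec w1 w2 c) u /\ coord_p u = s.

Definition supp_size (k : nat) (w : 'cV[int]_k) (t : int) : nat :=
  #|[set i : 'I_k | w i 0 + t != 0]|.

(* Main.v *)
Require Import Defs.
From HB Require Import structures.
From mathcomp Require Import all_boot all_order all_algebra zify.
From Stdlib Require Import Relations.
Set Implicit Arguments. Unset Strict Implicit. Unset Printing Implicit Defensive.


Fixpoint inbox (Ls x : seq nat) : bool :=
  match Ls, x with
  | [::], [::] => true
  | L :: Ls', a :: x' => (a <= L) && inbox Ls' x'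
  | _, _ => false end.

Fixpoint adjb (x y : seq nat) : bool :=
  match x, y with
  | a :: x', b :: y' => ((a == b) && adjb x' y') || (((a == b.+1) || (b == a.+1)) && (x' == y'))
  | _, _ => false end.

Fixpoint nbrs (Ls x : seq nat) : seq (seq nat) :=
  match Ls, x with
  | L :: Ls', a :: x' => (if 0 < a then [:: a.-1 :: x'] else [::]) ++
       (if a < L then [:: a.+1 :: x'] else [::]) ++ map (cons a) (nbrs Ls' x')
  | _, _ => [::] end.

Definition dd (Ls : seq nat) := count (fun L => 0 < L) Ls.
Definition zero (Ls : seq nat) := nseq (size Ls) 0.

Lemma adjbC x y : adjb x y = adjb y x.
Proof.
elim: x y => [|a x IH] [|b y] //=.
by rewrite IH (eq_sym b a) (eq_sym y x) (orbC (b == a.+1)).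
Qed.

Lemma adjb_irr x : adjb x x = false.
Proof. elim: x => //= a x ->; rewrite andbF /=; apply/negbTE; lia. Qed.

Lemma inbox_size Ls x : inbox Ls x -> size x = size Ls.
Proof. by elim: Ls x => [|L Ls IH] [|a x] //= /andP[_ /IH ->]. Qed.

Lemma mem_map_cons (a b : nat) (y : seq nat) (s : seq (seq nat)) : (b :: y \in map (cons a) s) = (b == a) && (y \in s).
Proof.
apply/mapP/andP => [[z zs [-> ->]]|[/eqP -> ys]]; last by exists y.
by rewrite eqxx.
Qed.

Lemma nil_notin_map (a : nat) (s : seq (seq nat)) : ([::] \in map (cons a) s) = false.
Proof. by apply/mapP => -[z _]. Qed.

Lemma nbrsP Ls x y : inbox Ls x -> (y \in nbrs Ls x) = inbox Ls y && adjb x y.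
Proof.
elim: Ls x y => [|L Ls IH] [|a x] [|b y] //=.
- move=> _; rewrite !mem_cat nil_notin_map orbF.
  by case: ifP => _; case: ifP => _.
- move=> /andP[ha hx]; rewrite !mem_cat mem_map_cons IH //.
  case: (0 < a)%N / ltP => h1; case: (a < L)%N / ltP => h2;
  rewrite ?in_cons ?in_nil ?orbF ?eqseq_cons /=;
  have [->|nexy] := eqVneq y x; rewrite ?adjb_irr ?hx ?eqxx ?andbF ?andbT ?orbF /=;
  try lia.
Qed.

Lemma nbrs_uniq Ls x : uniq (nbrs Ls x).
Proof.
elim: Ls x => [|L Ls IH] [|a x] //=.
have hu := map_inj_uniq (fun u v (e : a :: u = a :: v) => congr1 behead e).
case: (0 < a)%N / ltP => h1; case: (a < L)%N / ltP => h2 /=;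
rewrite ?in_cons ?mem_map_cons ?hu ?IH ?eqseq_cons ?andbT /=; apply/negP; lia.
Qed.

Lemma size_nbrs Ls x : inbox Ls x -> dd Ls <= size (nbrs Ls x).
Proof.
rewrite /dd; elim: Ls x => [|L Ls IH] [|a x] //= /andP[ha /IH hx].
rewrite !size_cat size_map.
case: (0 < a)%N / ltP => h1; case: (a < L)%N / ltP => h2 /=; lia.
Qed.

Lemma inbox_zero Ls : inbox Ls (zero Ls).
Proof. by elim: Ls => //= L Ls IH; rewrite IH andbT. Qed.

Lemma size_nbrs_zero Ls : size (nbrs Ls (zero Ls)) = dd Ls.
Proof.
rewrite /dd; elim: Ls => [|L Ls IH] //=.
rewrite !size_cat size_map IH; by case: L.
Qed.

Lemma zero_notin_nbrs Ls : zero Ls \notin nbrs Ls (zero Ls).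
Proof. by rewrite nbrsP ?inbox_zero // adjb_irr andbF. Qed.

Lemma exists_notin (T : eqType) (s t : seq T) : uniq s -> size t < size s ->
  exists2 x, x \in s & x \notin t.
Proof.
move=> us lt; case: (boolP (has (fun x => x \notin t) s)) => [/hasP[x ? ?]|/hasPn h].
  by exists x.
suff: size s <= size t by lia.
by apply: uniq_leq_size => // x /h; rewrite negbK.
Qed.

Definition Rb (Ls : seq nat) (S : seq (seq nat)) (a b : seq nat) : Prop :=
  [&& inbox Ls a, a \notin S, inbox Ls b, b \notin S & adjb a b].

Notation crt := (clos_refl_trans _).

Lemma crt_map (T1 T2 : Type) (R1 : relation T1) (R2 : relation T2) (f : T1 -> T2) :
  (forall a b, R1 a b -> R2 (f a) (f b)) -> forall x y, crt R1 x y -> crt R2 (f x) (f y).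
Proof.
move=> h x y; elim => [a b /h| a|a b c _ ? _ ?]; first by apply: rt_step.
  exact: rt_refl.
eapply rt_trans; eassumption.
Qed.

Lemma crt_sym (T : Type) (R : relation T) : (forall a b, R a b -> R b a) ->
  forall x y, crt R x y -> crt R y x.
Proof.
move=> h x y; elim => [a b /h| a|a b c _ ? _ ?]; first by apply: rt_step.
  exact: rt_refl.
eapply rt_trans; eassumption.
Qed.

Lemma Rb_sym Ls S a b : Rb Ls S a b -> Rb Ls S b a.
Proof. by rewrite /Rb adjbC => /and5P[-> -> -> -> ->]. Qed.

Fixpoint layer (j : nat) (S : seq (seq nat)) : seq (seq nat) :=
  match S with
  | [::] => [::]
  | z :: S' => if z is j' :: z' then (if j' == j then z' :: layer j S' else layer j S')
               else layer j S'
  end.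

Lemma mem_layer j S z : (z \in layer j S) = (j :: z \in S).
Proof.
elim: S => [|[|j' z'] S IH] //=.
rewrite in_cons eqseq_cons; case: (j' =P j) => [->|ne]; rewrite ?in_cons ?eqxx IH //=.
by case: (j =P j') => // e; case: ne.
Qed.

Lemma layer_disj j j' (S : seq (seq nat)) : j != j' -> size (layer j S) + size (layer j' S) <= size S.
Proof.
move=> ne; elim: S => [|[|a z'] S IH] //=; first lia.
case: (a =P j) => [e|_]; case: (a =P j') => [e'|_] /=; try lia.
Qed.

Lemma size_layer j (S : seq (seq nat)) : size (layer j S) <= size S.
Proof. elim: S => [|[|a z'] S IH] //=; try lia; case: ifP => _ /=; lia. Qed.

Lemma lift_crt L Ls S S' j x y : j <= L -> (forall z, j :: z \in S -> z \in S') ->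
  crt (Rb Ls S') x y -> crt (Rb (L :: Ls) S) (j :: x) (j :: y).
Proof.
move=> hj hS; apply: (crt_map (f := cons j)) => a b /and5P[ia na ib nb ab].
apply/and5P; split => /=; rewrite ?hj ?ia ?ib ?eqxx ?ab //.
  by apply/negP => /hS; rewrite (negbTE na).
by apply/negP => /hS; rewrite (negbTE nb).
Qed.

Lemma line_crt L Ls S y : inbox Ls y -> (forall j, j <= L -> j :: y \notin S) ->
  forall n a, a + n <= L -> crt (Rb (L :: Ls) S) (a :: y) ((a + n) :: y).
Proof.
move=> iy hS; elim => [|n IH] a h; first by rewrite addn0; apply: rt_refl.
apply: rt_trans (IH a _) _; first lia.
apply: rt_step; apply/and5P; split => /=; rewrite ?iy ?hS ?andbT //; try lia.
rewrite eqxx /=; apply/orP; right; lia.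
Qed.

Lemma conn0 Ls x y : inbox Ls x -> inbox Ls y -> crt (Rb Ls [::]) x y.
Proof.
elim: Ls x y => [|L Ls IH] [|a x] [|b y] //=; first by move=> *; apply: rt_refl.
move=> /andP[ha hx] /andP[hb hy].
apply: rt_trans (lift_crt (S' := [::]) ha _ (IH _ _ hx hy)) _ => //.
have hl := line_crt (L := L) (S := [::]) hy (fun _ _ => isT).
case: (leqP a b) => hab.
  by have := hl (b - a) a; rewrite subnKC //; apply.
apply: (crt_sym (@Rb_sym _ _)).
by have := hl (a - b) b; rewrite subnKC ?(ltnW hab) //; apply.
Qed.

Lemma start_uniq Ls : uniq (zero Ls :: nbrs Ls (zero Ls)).
Proof. by rewrite /= zero_notin_nbrs nbrs_uniq. Qed.

Lemma start_inbox Ls z : z \in zero Ls :: nbrs Ls (zero Ls) -> inbox Ls z.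
Proof.
rewrite in_cons => /orP[/eqP ->|]; first exact: inbox_zero.
by rewrite nbrsP ?inbox_zero // => /andP[].
Qed.

Theorem conn_box Ls S x y : size S < dd Ls -> inbox Ls x -> inbox Ls y ->
  x \notin S -> y \notin S -> crt (Rb Ls S) x y.
Proof.
elim: Ls S x y => [|L Ls IH] S [|a x] [|b y] //=; rewrite /dd /= -/(dd Ls).
move=> hS /andP[ha hx] /andP[hb hy] nx ny.
case: L ha hb hS => [|L] ha hb /= hS.
  have a0 : a = 0 by lia.
  have b0 : b = 0 by lia.
  subst a b; apply: (lift_crt (S' := layer 0 S)) => //.
    by move=> z; rewrite mem_layer.
  apply: IH => //.
  have := size_layer 0 S; set m := size (layer 0 S); lia.
    by rewrite mem_layer.
  by rewrite mem_layer.
set L1 := L.+1.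
have G : forall j z1 z2, j <= L1 -> inbox Ls z1 -> inbox Ls z2 -> j :: z1 \notin S ->
    j :: z2 \notin S -> crt (Rb (L1 :: Ls) S) (j :: z1) (j :: z2).
  move=> j z1 z2 hj h1 h2 n1 n2.
  case: (ltnP (size (layer j S)) (dd Ls)) => hl.
    apply: (lift_crt (S' := layer j S)) => //; first by move=> z; rewrite mem_layer.
    by apply: IH; rewrite // mem_layer.
  pose j' := if j < L1 then j.+1 else j.-1.
  have hj' : j' <= L1 by rewrite /j'; case: (ltnP j L1) => h; lia.
  have nej : j != j' by rewrite /j'; case: (ltnP j L1) => h; lia.
  have e0 : layer j' S = [::].
    have := layer_disj S nej; have := size_layer j S.
    by case: (layer j' S) => //= *; lia.
  have nS : forall z, j' :: z \notin S by move=> z; rewrite -mem_layer e0.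
  have st : forall z, inbox Ls z -> j :: z \notin S ->
      Rb (L1 :: Ls) S (j :: z) (j' :: z).
    move=> z iz nz; apply/and5P; split => //=; rewrite ?hj ?hj' ?iz ?nS ?eqxx //.
    apply/orP; right; rewrite andbT /j'; case: (ltnP j L1) => h; lia.
  apply: rt_trans (rt_step _ _ _ _ (st _ h1 n1)) _.
  apply: rt_trans _ (rt_step _ _ _ _ (Rb_sym (st _ h2 n2))).
  apply: (lift_crt (S' := [::])) => //; last exact: conn0.
  by move=> z; rewrite (negbTE (nS z)).
have B : forall j, j < L1 -> exists2 z, inbox Ls z & (j :: z \notin S) && (j.+1 :: z \notin S).
  move=> j hj.
  have [|z zs zt] := exists_notin (start_uniq Ls) (t := layer j S ++ layer j.+1 S).
    rewrite size_cat /= size_nbrs_zero.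
    have : j != j.+1 by lia.
    move/(layer_disj S); lia.
  exists z; first exact: start_inbox.
  by move: zt; rewrite mem_cat !mem_layer negb_or.
have C : forall n j z1 z2, j + n <= L1 -> inbox Ls z1 -> inbox Ls z2 -> j :: z1 \notin S ->
    (j + n) :: z2 \notin S -> crt (Rb (L1 :: Ls) S) (j :: z1) ((j + n) :: z2).
  elim => [|n IHn] j z1 z2 hjn h1 h2 n1 n2.
    by rewrite addn0 in hjn n2 *; apply: G.
  have hj : j < L1 by rewrite -addn1 (leq_trans _ hjn) // leq_add2l.
  have [z iz /andP[nz nz']] := B j hj.
  apply: rt_trans (G j z1 z (ltnW hj) h1 iz n1 nz) _.
  apply: (rt_trans _ _ _ (j.+1 :: z)).
    apply: rt_step; apply/and5P; split => //=; rewrite ?iz ?nz ?nz' ?eqxx ?andbT ?hj ?(ltnW hj) //.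
    by apply/or3P; apply: Or33.
  have e := addSnnS j n; rewrite -e in hjn n2 *.
  exact: IHn.
case: (leqP a b) => hab.
  have := C (b - a) a x y; rewrite subnKC //; apply => //.
apply: (crt_sym (@Rb_sym _ _)).
have := C (a - b) b y x; rewrite subnKC ?(ltnW hab) //; apply => //.
Qed.
Lemma adjb_cat (x1 x2 y1 y2 : seq nat) : size x1 = size y1 ->
  adjb (x1 ++ x2) (y1 ++ y2) = (adjb x1 y1 && (x2 == y2)) || ((x1 == y1) && adjb x2 y2).
Proof.
elim: x1 y1 => [|a x1 IH] [|b y1] //= [e].
rewrite IH // eqseq_cat // eqseq_cons.
case: ((a == b.+1) || (b == a.+1)); case: (a == b); case: (adjb x1 y1); case: (adjb x2 y2);
  case: (x1 == y1); case: (x2 == y2) => //.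
Qed.

Lemma inbox_cat (L1 L2 x1 x2 : seq nat) : size L1 = size x1 ->
  inbox (L1 ++ L2) (x1 ++ x2) = inbox L1 x1 && inbox L2 x2.
Proof.
elim: L1 x1 => [|L L1 IH] [|a x1] //= [e].
by rewrite IH // andbA.
Qed.

Lemma inbox_map (T : Type) (s : seq T) (L f : T -> nat) :
  inbox (map L s) (map f s) = all (fun e => f e <= L e) s.
Proof. by elim: s => //= a s ->. Qed.

Lemma inbox_nth Ls x j : inbox Ls x -> nth 0 x j <= nth 0 Ls j.
Proof.
elim: Ls x j => [|L Ls IH] [|a x] //= [|j] /andP[h1 h2] //; exact: IH.
Qed.

Lemma eq_map_in (T : eqType) (s : seq T) (f g : T -> nat) :
  (map f s == map g s) = all (fun e => f e == g e) s.
Proof. by elim: s => //= a s <-; rewrite eqseq_cons. Qed.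

Lemma adjb_map (T : eqType) (s : seq T) (f g : T -> nat) : uniq s ->
  adjb (map f s) (map g s) <->
  exists e, [/\ e \in s, (f e == (g e).+1) || (g e == (f e).+1) &
                 forall e', e' \in s -> e' != e -> f e' = g e'].
Proof.
elim: s => [|a s IH] /=; first by split => // -[e []].
case/andP => nas us; split.
  case/orP => [/andP[/eqP fa /(IH us) [e [es st oth]]]|/andP[st /eqP me]].
    exists e; split; rewrite ?in_cons ?es ?orbT //.
    move=> e'; rewrite in_cons => /orP[/eqP ->|e's] ne; first by [].
    exact: oth.
  exists a; split; rewrite ?in_cons ?eqxx //.
  move=> e'; rewrite in_cons => /orP[/eqP ->|e's] ne; first by rewrite eqxx in ne.
  by have := congr1 (nth 0) me => _; move/eqP: me; rewrite eq_map_in => /allP /(_ _ e's) /eqP.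
case=> e [es st oth]; move: es; rewrite in_cons => /orP[/eqP ee|es].
  subst e; apply/orP; right; rewrite st /= eq_map_in; apply/allP => e' e's.
  by rewrite oth ?in_cons ?e's ?orbT //; apply: contra nas => /eqP <-.
apply/orP; left; rewrite oth ?in_cons ?eqxx //=; last first.
  by apply: contra nas => /eqP ->.
apply/IH => //; exists e; split => // e' e's ne.
by apply: oth; rewrite // in_cons e's orbT.
Qed.

Lemma nth_map_enum k (f : 'I_k -> nat) (i : 'I_k) : nth 0 (map f (enum 'I_k)) i = f i.
Proof. by rewrite (nth_map i) ?size_enum_ord // nth_ord_enum. Qed.

Lemma map_nth_enum k (x : seq nat) m : m + k <= size x ->
  map (fun i : 'I_k => nth 0 x (m + i)) (enum 'I_k) = take k (drop m x).
Proof.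
move=> h; apply: (@eq_from_nth _ 0).
  by rewrite size_map size_enum_ord size_take size_drop; case: ltnP => //; lia.
rewrite size_map size_enum_ord => j hj.
by rewrite (nth_map (Ordinal hj)) ?size_enum_ord // nth_take // nth_drop nth_enum_ord.
Qed.

Lemma size_enumI k : size (enum 'I_k) = k.
Proof. exact: size_enum_ord. Qed.

Section Transfer.
Variables (T : eqType) (V : T -> Prop) (adj : T -> T -> Prop) (Ls : seq nat)
  (phi : T -> seq nat) (psi : seq nat -> T).
Hypotheses (h1 : forall u, V u -> inbox Ls (phi u))
  (h2 : forall x, inbox Ls x -> V (psi x))
  (h3 : forall x, inbox Ls x -> phi (psi x) = x)
  (h4 : forall u, V u -> psi (phi u) = u)
  (h5 : forall u v, V u -> V v -> (adj u v <-> adjb (phi u) (phi v))).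

Lemma psi_inj_in (s : seq (seq nat)) : (forall x, x \in s -> inbox Ls x) -> {in s &, injective psi}.
Proof. by move=> hs x y xs ys e; rewrite -(h3 (hs _ xs)) -(h3 (hs _ ys)) e. Qed.

Lemma deg_tr u : V u -> has_degree V adj u (size (nbrs Ls (phi u))).
Proof.
move=> Vu; have iu := h1 Vu.
exists (map psi (nbrs Ls (phi u))); split; last split.
- rewrite map_inj_in_uniq ?nbrs_uniq //; apply: psi_inj_in => x.
  by rewrite nbrsP // => /andP[].
- by rewrite size_map.
- move=> w; split.
    case/mapP => y; rewrite nbrsP // => /andP[iy ay] ->.
    by split; [exact: h2|]; apply/h5 => //; [exact: h2|]; rewrite h3.
  case=> Vw /h5 - /(_ Vu Vw) a.
  by rewrite -(h4 Vw); apply: map_f; rewrite nbrsP // h1.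
Qed.

Lemma min_deg_tr : min_degree_eq V adj (dd Ls).
Proof.
split.
  exists (psi (zero Ls)); split; first exact/h2/inbox_zero.
  by have := deg_tr (h2 (inbox_zero Ls)); rewrite h3 ?inbox_zero // size_nbrs_zero.
move=> v Vv; exists (size (nbrs Ls (phi v))); split; first exact: deg_tr.
exact/size_nbrs/h1.
Qed.

Lemma vconn_tr : vconnected V adj (dd Ls).
Proof.
split.
  exists (map psi (zero Ls :: nbrs Ls (zero Ls))); split; last split.
  - by rewrite map_inj_in_uniq ?start_uniq //; apply: psi_inj_in; exact: start_inbox.
  - by rewrite size_map /= size_nbrs_zero.
  - by move=> x /mapP[y /start_inbox iy ->]; exact: h2.
move=> S hS u v [Vu nu] [Vv nv].
pose S' := [seq x <- map phi S | psi x \in S].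
have hS' : size S' < dd Ls by apply: leq_ltn_trans hS; rewrite /S' size_filter -(size_map phi S) count_size.
have key : forall x, inbox Ls x -> x \notin S' -> psi x \notin S.
  move=> x ix; apply: contra => xS; rewrite mem_filter xS /=.
  by rewrite -(h3 ix); apply: map_f.
have nin : forall w, V w -> w \notin S -> phi w \notin S'.
  by move=> w Vw; apply: contra; rewrite mem_filter h4 // => /andP[].
rewrite -(h4 Vu) -(h4 Vv).
apply: (crt_map (R1 := Rb Ls S')); last first.
  by apply: conn_box; rewrite ?nin ?h1.
move=> a b /and5P[ia na ib nb ab].
split; first by split; [exact: h2| exact: key].
split; first by split; [exact: h2| exact: key].
by apply/h5; rewrite ?h3 //; exact: h2.
Qed.

Lemma vconn_max m : vconnected V adj m -> (m <= dd Ls)%N.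
Proof.
case=> [[s [us [ms Vs]]] hc]; rewrite leqNgt; apply/negP => lt.
have uphi : uniq (map phi s).
  rewrite map_inj_in_uniq // => a b ha hb e.
  by rewrite -(h4 (Vs _ ha)) -(h4 (Vs _ hb)) e.
have [|y0 /mapP[w ws ->] yt] := exists_notin uphi (t := zero Ls :: nbrs Ls (zero Ls)).
  by rewrite size_map /= size_nbrs_zero; apply: leq_ltn_trans ms.
have Vw := Vs _ ws.
pose S := map psi (nbrs Ls (zero Ls)).
have hS : size S < m by rewrite size_map size_nbrs_zero.
have iz := inbox_zero Ls.
have nz : psi (zero Ls) \notin S.
  apply/mapP => -[y yn e].
  have iy : inbox Ls y by move: yn; rewrite nbrsP // => /andP[].
  move: yn; rewrite -(h3 iy) -e h3 // => yn.
  by move: (zero_notin_nbrs Ls); rewrite yn.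
have nw : w \notin S.
  apply/mapP => -[y yn e].
  have iy : inbox Ls y by move: yn; rewrite nbrsP // => /andP[].
  by move: yt; rewrite in_cons e h3 // yn orbT.
have hr0 := hc S hS (psi (zero Ls)) w (conj (h2 iz) nz) (conj Vw nw).
have hr := clos_rt_rt1n _ _ _ _ hr0; clear hr0; destruct hr as [|x0 z hstep _].
  by move: yt; rewrite h3 // in_cons eqxx.
case: hstep => _ [[Vz nzS] az].
have := (h5 (h2 iz) Vz).1 az; rewrite h3 // => {}az.
have : phi x0 \in nbrs Ls (zero Ls) by rewrite nbrsP // h1.
by move/(map_f psi); rewrite h4 // => zS; move: nzS; rewrite zS.
Qed.

Lemma transfer : min_degree_eq V adj (dd Ls) /\ vconnectivity_eq V adj (dd Ls).
Proof. split; [exact: min_deg_tr | split; [exact: vconn_tr | exact: vconn_max]]. Qed.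
End Transfer.

Import Order.TTheory GRing.Theory Num.Theory.
Local Open Scope ring_scope.

Section Mat.
Variable k : nat.
Local Notation N := (k + k + k + k + 1 + 1)%N.

Definition ixI (i : 'I_k) : 'I_N := lshift 1 (lshift 1 (lshift k (lshift k (lshift k i)))).
Definition iyI (i : 'I_k) : 'I_N := lshift 1 (lshift 1 (lshift k (lshift k (rshift k i)))).
Definition izI (i : 'I_k) : 'I_N := lshift 1 (lshift 1 (lshift k (rshift (k + k) i))).
Definition itI (i : 'I_k) : 'I_N := lshift 1 (lshift 1 (rshift (k + k + k) i)).
Definition ip : 'I_N := lshift 1 (rshift (k + k + k + k) ord0).
Definition iq : 'I_N := rshift (k + k + k + k + 1) ord0.

Definition mkv (X Y Z T : 'cV[int]_k) (p q : int) : 'cV[int]_N :=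
  col_mx (col_mx (col_mx (col_mx (col_mx X Y) Z) T) (const_mx p)) (const_mx q).

Section MkvE.
Variables (X Y Z T : 'cV[int]_k) (p q : int) (i : 'I_k).
Lemma mkv_x : mkv X Y Z T p q (ixI i) 0 = X i 0. Proof. by rewrite /mkv /ixI !col_mxEu. Qed.
Lemma mkv_y : mkv X Y Z T p q (iyI i) 0 = Y i 0. Proof. by rewrite /mkv /iyI !col_mxEu col_mxEd. Qed.
Lemma mkv_z : mkv X Y Z T p q (izI i) 0 = Z i 0. Proof. by rewrite /mkv /izI !col_mxEu col_mxEd. Qed.
Lemma mkv_t : mkv X Y Z T p q (itI i) 0 = T i 0. Proof. by rewrite /mkv /itI !col_mxEu col_mxEd. Qed.
Lemma mkv_p : mkv X Y Z T p q ip 0 = p. Proof. by rewrite /mkv /ip !col_mxEu col_mxEd mxE. Qed.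
Lemma mkv_q : mkv X Y Z T p q iq 0 = q. Proof. by rewrite /mkv /iq !col_mxEd mxE. Qed.
End MkvE.

Lemma allP6 (P : int -> int -> Prop) (u v : 'cV[int]_N) :
  (forall i, P (u (ixI i) 0) (v (ixI i) 0)) -> (forall i, P (u (iyI i) 0) (v (iyI i) 0)) ->
  (forall i, P (u (izI i) 0) (v (izI i) 0)) -> (forall i, P (u (itI i) 0) (v (itI i) 0)) ->
  P (u ip 0) (v ip 0) -> P (u iq 0) (v iq 0) -> forall idx, P (u idx 0) (v idx 0).
Proof.
move=> hx hy hz ht hp hq idx.
case: (split_ordP idx) => j ->; last by rewrite (ord1 j); exact: hq.
case: (split_ordP j) => {}j ->; last by rewrite (ord1 j); exact: hp.
case: (split_ordP j) => {}j ->; last exact: ht.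
case: (split_ordP j) => {}j ->; last exact: hz.
case: (split_ordP j) => {}j ->; last exact: hy.
exact: hx.
Qed.

Lemma vecP (u v : 'cV[int]_N) :
  (forall i, u (ixI i) 0 = v (ixI i) 0) -> (forall i, u (iyI i) 0 = v (iyI i) 0) ->
  (forall i, u (izI i) 0 = v (izI i) 0) -> (forall i, u (itI i) 0 = v (itI i) 0) ->
  u ip 0 = v ip 0 -> u iq 0 = v iq 0 -> u = v.
Proof.
move=> hx hy hz ht hp hq; apply/matrixP => idx j; rewrite (ord1 j).
exact: (allP6 (P := eq)).
Qed.

Lemma decomp (u : 'cV[int]_N) : u = mkv (\col_i u (ixI i) 0) (\col_i u (iyI i) 0)
   (\col_i u (izI i) 0) (\col_i u (itI i) 0) (u ip 0) (u iq 0).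
Proof.
by apply: vecP => *; rewrite ?mkv_x ?mkv_y ?mkv_z ?mkv_t ?mkv_p ?mkv_q ?mxE.
Qed.

Lemma const_mul m n (a b : int) :
  (const_mx a : 'M_(m, 1)) *m (const_mx b : 'M_(1, n)) = const_mx (a * b).
Proof. by apply/matrixP => i j; rewrite !mxE big_ord1 !mxE. Qed.

Lemma Amul_mkv X Y Z T p q : A_mat k *m mkv X Y Z T p q =
  col_mx (col_mx (X + Y - const_mx p) (Z + T - const_mx q)) (const_mx (p + q)).
Proof.
rewrite /A_mat /mkv mul_col_mx mul_col_mx !mul_row_col !mul0mx !mul1mx !mulNmx !const_mul.
by rewrite !mul1r !addr0 !add0r -const_mx_is_nmod_morphism.
Qed.

Lemma Amul_eq (u : 'cV[int]_N) (B1 B2 : 'cV[int]_k) (c : int) :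
  A_mat k *m u = col_mx (col_mx B1 B2) (const_mx c) <->
  [/\ forall i, u (ixI i) 0 + u (iyI i) 0 - u ip 0 = B1 i 0,
      forall i, u (izI i) 0 + u (itI i) 0 - u iq 0 = B2 i 0 &
      u ip 0 + u iq 0 = c].
Proof.
rewrite {1}(decomp u) Amul_mkv; split.
  case/eq_col_mx => /eq_col_mx [e1 e2] e3; split.
  - by move=> i; move/matrixP: e1 => /(_ i 0); rewrite !mxE.
  - by move=> i; move/matrixP: e2 => /(_ i 0); rewrite !mxE.
  - by move/matrixP: e3 => /(_ 0 0); rewrite !mxE.
case=> e1 e2 e3; congr col_mx; [congr col_mx|];
  by apply/matrixP => i j; rewrite ?ord1 !mxE ?e1 ?e2 ?e3.
Qed.

Lemma zero_col : (0 : 'cV[int]_(k + k + 1)) = col_mx (col_mx 0 0) (const_mx 0).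
Proof. by apply/matrixP => i j; rewrite !mxE; case: splitP => ? _; rewrite !mxE //; case: splitP => *; rewrite mxE. Qed.

Lemma ker_eq (u : 'cV[int]_N) : A_mat k *m u = 0 <->
  [/\ forall i, u (ixI i) 0 + u (iyI i) 0 - u ip 0 = 0,
      forall i, u (izI i) 0 + u (itI i) 0 - u iq 0 = 0 &
      u ip 0 + u iq 0 = 0].
Proof.
rewrite zero_col Amul_eq.
by split; case=> e1 e2 e3; split => // i; rewrite ?e1 ?e2 ?mxE.
Qed.

Lemma zero_entry idx : (0 : 'cV[int]_N) idx 0 = 0. Proof. by rewrite mxE. Qed.

Lemma coord_pE (u : 'cV[int]_N) : coord_p u = u ip 0.
Proof. by rewrite /coord_p !mxE. Qed.

Section Fiber.
Variables (w1 w2 : 'cV[int]_k) (c s : int).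
Hypotheses (s0 : 0 <= s) (cs0 : 0 <= c - s).

Lemma CsP u : C_s w1 w2 c s u <->
  [/\ u ip 0 = s, u iq 0 = c - s,
      forall i, [/\ 0 <= u (ixI i) 0, 0 <= u (iyI i) 0 & u (ixI i) 0 + u (iyI i) 0 = w1 i 0 + s] &
      forall i, [/\ 0 <= u (izI i) 0, 0 <= u (itI i) 0 & u (izI i) 0 + u (itI i) 0 = w2 i 0 + (c - s)]].
Proof.
rewrite /C_s /in_fiber /b_vec coord_pE Amul_eq; split.
  case=> -[nn [e1 e2 e3]] ep; split => //; first lia.
    by move=> i; have := e1 i; have := nn (ixI i); have := nn (iyI i); split => //; lia.
  by move=> i; have := e2 i; have := nn (izI i); have := nn (itI i); split => //; lia.
case=> ep eq hx hz; split => //; split; last split.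
- apply: (allP6 (P := fun a _ => 0 <= a) (v := u)); rewrite ?ep ?eq //.
  + by move=> i; case: (hx i).
  + by move=> i; case: (hx i).
  + by move=> i; case: (hz i).
  + by move=> i; case: (hz i).
- by move=> i; case: (hx i) => _ _ e; lia.
- by move=> i; case: (hz i) => _ _ e; lia.
- lia.
Qed.

Definition delta (i : 'I_k) (sg : int) : 'cV[int]_k := \col_j ((j == i)%:R * sg).
Definition exs i sg := mkv (delta i sg) (delta i (- sg)) 0 0 0 0.
Definition ezs i sg := mkv 0 0 (delta i sg) (delta i (- sg)) 0 0.

Lemma exs_ker i sg : A_mat k *m exs i sg = 0.
Proof.
apply/ker_eq; split => [j|j|]; rewrite /exs /delta ?mkv_x ?mkv_y ?mkv_z ?mkv_t ?mkv_p ?mkv_q ?mxE;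
  by rewrite ?mulrN ?addrN ?subr0 ?addr0.
Qed.

Lemma ezs_ker i sg : A_mat k *m ezs i sg = 0.
Proof.
apply/ker_eq; split => [j|j|]; rewrite /ezs /delta ?mkv_x ?mkv_y ?mkv_z ?mkv_t ?mkv_p ?mkv_q ?mxE;
  by rewrite ?mulrN ?addrN ?subr0 ?addr0.
Qed.

Lemma exs_nz i sg : `|sg| = 1 -> exs i sg <> 0.
Proof.
move=> h1 /(congr1 (fun M : 'cV[int]_N => M (ixI i) 0)).
rewrite /exs mkv_x !mxE eqxx mul1r; lia.
Qed.

Lemma ezs_nz i sg : `|sg| = 1 -> ezs i sg <> 0.
Proof.
move=> h1 /(congr1 (fun M : 'cV[int]_N => M (izI i) 0)).
rewrite /ezs mkv_z !mxE eqxx mul1r; lia.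
Qed.

Lemma graver_exs i sg : `|sg| = 1 -> in_graver (A_mat k) (exs i sg).
Proof.
move=> h1; split; first exact: exs_ker.
split; first exact: exs_nz.
move=> h /ker_eq [e1 e2 e3] hnz hc.
have cx j := hc (ixI j); have cy j := hc (iyI j); have cz j := hc (izI j).
have ct j := hc (itI j); have cp := hc ip; have cq := hc iq.
have fx j : j != i -> h (ixI j) 0 = 0.
  by move=> ne; move: (cx j); rewrite /exs /delta ?mkv_x ?mkv_y ?mkv_z ?mkv_t ?mkv_p ?mkv_q !mxE (negbTE ne) mul0r; lia.
have fy j : j != i -> h (iyI j) 0 = 0.
  by move=> ne; move: (cy j); rewrite /exs /delta ?mkv_x ?mkv_y ?mkv_z ?mkv_t ?mkv_p ?mkv_q !mxE (negbTE ne) mul0r; lia.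
have fz j : h (izI j) 0 = 0 by move: (cz j); rewrite /exs /delta ?mkv_x ?mkv_y ?mkv_z ?mkv_t ?mkv_p ?mkv_q !mxE; lia.
have ft j : h (itI j) 0 = 0 by move: (ct j); rewrite /exs /delta ?mkv_x ?mkv_y ?mkv_z ?mkv_t ?mkv_p ?mkv_q !mxE; lia.
have fp : h ip 0 = 0 by move: cp; rewrite /exs mkv_p; lia.
have fq : h iq 0 = 0 by move: cq; rewrite /exs mkv_q; lia.
have xi := cx i; have yi := cy i; have ei := e1 i.
rewrite /exs /delta ?mkv_x ?mkv_y ?mkv_z ?mkv_t ?mkv_p ?mkv_q !mxE eqxx !mul1r in xi yi.
have [x0|xn0] := eqVneq (h (ixI i) 0) 0.
  exfalso; apply: hnz; apply: vecP => [j|j|j|j||]; rewrite zero_entry.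
  - by case: (eqVneq j i) => [->|ne]; [|apply: fx].
  - case: (eqVneq j i) => [->|ne]; [lia|exact: fy].
  - exact: fz.
  - exact: ft.
  - exact: fp.
  - exact: fq.
have hxi : h (ixI i) 0 = sg by nia.
have hyi : h (iyI i) 0 = - sg by lia.
apply: vecP => [j|j|j|j||]; rewrite /exs /delta ?mkv_x ?mkv_y ?mkv_z ?mkv_t ?mkv_p ?mkv_q ?mxE.
- by case: (eqVneq j i) => [->|ne]; rewrite ?eqxx ?mul1r // fx // mul0r.
- by case: (eqVneq j i) => [->|ne]; rewrite ?eqxx ?mul1r // fy // mul0r.
- exact: fz.
- exact: ft.
- exact: fp.
- exact: fq.
Qed.

Lemma graver_ezs i sg : `|sg| = 1 -> in_graver (A_mat k) (ezs i sg).
Proof.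
move=> h1; split; first exact: ezs_ker.
split; first exact: ezs_nz.
move=> h /ker_eq [e1 e2 e3] hnz hc.
have cx j := hc (ixI j); have cy j := hc (iyI j); have cz j := hc (izI j).
have ct j := hc (itI j); have cp := hc ip; have cq := hc iq.
have fz j : j != i -> h (izI j) 0 = 0.
  by move=> ne; move: (cz j); rewrite /ezs /delta ?mkv_x ?mkv_y ?mkv_z ?mkv_t ?mkv_p ?mkv_q !mxE (negbTE ne) mul0r; lia.
have ft j : j != i -> h (itI j) 0 = 0.
  by move=> ne; move: (ct j); rewrite /ezs /delta ?mkv_x ?mkv_y ?mkv_z ?mkv_t ?mkv_p ?mkv_q !mxE (negbTE ne) mul0r; lia.
have fx j : h (ixI j) 0 = 0 by move: (cx j); rewrite /ezs /delta ?mkv_x ?mkv_y ?mkv_z ?mkv_t ?mkv_p ?mkv_q !mxE; lia.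
have fy j : h (iyI j) 0 = 0 by move: (cy j); rewrite /ezs /delta ?mkv_x ?mkv_y ?mkv_z ?mkv_t ?mkv_p ?mkv_q !mxE; lia.
have fp : h ip 0 = 0 by move: cp; rewrite /ezs mkv_p; lia.
have fq : h iq 0 = 0 by move: cq; rewrite /ezs mkv_q; lia.
have xi := cz i; have yi := ct i; have ei := e2 i.
rewrite /ezs /delta ?mkv_x ?mkv_y ?mkv_z ?mkv_t ?mkv_p ?mkv_q !mxE eqxx !mul1r in xi yi.
have [x0|xn0] := eqVneq (h (izI i) 0) 0.
  exfalso; apply: hnz; apply: vecP => [j|j|j|j||]; rewrite zero_entry.
  - exact: fx.
  - exact: fy.
  - by case: (eqVneq j i) => [->|ne]; [|apply: fz].
  - case: (eqVneq j i) => [->|ne]; [lia|exact: ft].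
  - exact: fp.
  - exact: fq.
have hxi : h (izI i) 0 = sg by nia.
have hyi : h (itI i) 0 = - sg by lia.
apply: vecP => [j|j|j|j||]; rewrite /ezs /delta ?mkv_x ?mkv_y ?mkv_z ?mkv_t ?mkv_p ?mkv_q ?mxE.
- exact: fx.
- exact: fy.
- by case: (eqVneq j i) => [->|ne]; rewrite ?eqxx ?mul1r // fz // mul0r.
- by case: (eqVneq j i) => [->|ne]; rewrite ?eqxx ?mul1r // ft // mul0r.
- exact: fp.
- exact: fq.
Qed.


Lemma graver_char u v : C_s w1 w2 c s u -> C_s w1 w2 c s v -> in_graver (A_mat k) (u - v) ->
  (exists i, [/\ `|u (ixI i) 0 - v (ixI i) 0| = 1,
      forall j, j != i -> u (ixI j) 0 = v (ixI j) 0 & forall j, u (izI j) 0 = v (izI j) 0]) \/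
  (exists i, [/\ `|u (izI i) 0 - v (izI i) 0| = 1,
      forall j, j != i -> u (izI j) 0 = v (izI j) 0 & forall j, u (ixI j) 0 = v (ixI j) 0]).
Proof.
move=> /CsP [pu qu xu zu] /CsP [pv qv xv zv] [_ [gnz gmin]].
have gE idx : (u - v) idx 0 = u idx 0 - v idx 0 by rewrite !mxE.
case: (boolP [exists i, u (ixI i) 0 != v (ixI i) 0]) => [/existsP [i ne]|/existsPn allx].
  left; set a := u (ixI i) 0 - v (ixI i) 0.
  have an0 : a != 0 by rewrite subr_eq0.
  set sg := if 0 < a then 1 else -1 : int.
  have hsg : `|sg| = 1 by rewrite /sg; case: ifP.
  have hsa : 0 <= sg * a /\ `|sg| <= `|a|.
    by rewrite /sg; case: ifP => h; lia.
  have hc : conf_le (exs i sg) (u - v).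
    apply: (allP6 (P := fun a b => 0 <= a * b /\ `|a| <= `|b|)) => [j'|j'|j'|j'||];
      rewrite gE /exs /delta ?mkv_x ?mkv_y ?mkv_z ?mkv_t ?mkv_p ?mkv_q ?mxE.
    - by case: (eqVneq j' i) => [->|_]; rewrite ?mul1r ?mul0r //; lia.
    - case: (eqVneq j' i) => [->|_]; rewrite ?mul1r ?mul0r //.
      case: (xu i) => _ _; case: (xv i) => _ _ e1 e2.
      have -> : u (iyI i) 0 - v (iyI i) 0 = - a by rewrite /a; lia.
      by rewrite mulrNN normrN normrN; exact: hsa.
    - by rewrite mul0r; lia.
    - by rewrite mul0r; lia.
    - by rewrite mul0r; lia.
    - by rewrite mul0r; lia.
  have e := gmin _ (exs_ker i sg) (@exs_nz i sg hsg) hc.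
  have ex j : (j == i)%:R * sg = u (ixI j) 0 - v (ixI j) 0.
    by rewrite -gE -e /exs /delta mkv_x mxE.
  have ez j : 0 = u (izI j) 0 - v (izI j) 0.
    by rewrite -gE -e /exs /delta mkv_z mxE.
  exists i; split.
  - by have := ex i; rewrite eqxx mul1r => <-.
  - by move=> j nji; have := ex j; rewrite (negbTE nji) mul0r; lia.
  - by move=> j; have := ez j; lia.
have ax j : u (ixI j) 0 = v (ixI j) 0 by apply/eqP; exact: negbNE (allx j).
right.
case: (boolP [exists i, u (izI i) 0 != v (izI i) 0]) => [/existsP [i ne]|/existsPn allz]; last first.
  have az j : u (izI j) 0 = v (izI j) 0 by apply/eqP; exact: negbNE (allz j).
  exfalso; apply: gnz; apply: vecP => [j|j|j|j||]; rewrite gE zero_entry.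
  - by rewrite ax subrr.
  - by have := ax j; case: (xu j) => _ _; case: (xv j) => _ _; lia.
  - by rewrite az subrr.
  - by have := az j; case: (zu j) => _ _; case: (zv j) => _ _; lia.
  - lia.
  - lia.
set a := u (izI i) 0 - v (izI i) 0.
have an0 : a != 0 by rewrite subr_eq0.
set sg := if 0 < a then 1 else -1 : int.
have hsg : `|sg| = 1 by rewrite /sg; case: ifP.
have hsa : 0 <= sg * a /\ `|sg| <= `|a|.
  by rewrite /sg; case: ifP => h; lia.
have hc : conf_le (ezs i sg) (u - v).
  apply: (allP6 (P := fun a b => 0 <= a * b /\ `|a| <= `|b|)) => [j'|j'|j'|j'||];
    rewrite gE /ezs /delta ?mkv_x ?mkv_y ?mkv_z ?mkv_t ?mkv_p ?mkv_q ?mxE.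
  - by rewrite mul0r; lia.
  - by rewrite mul0r; lia.
  - by case: (eqVneq j' i) => [->|_]; rewrite ?mul1r ?mul0r //; lia.
  - case: (eqVneq j' i) => [->|_]; rewrite ?mul1r ?mul0r //.
    case: (zu i) => _ _; case: (zv i) => _ _ e1 e2.
    have -> : u (itI i) 0 - v (itI i) 0 = - a by rewrite /a; lia.
    by rewrite mulrNN normrN normrN; exact: hsa.
  - by rewrite mul0r; lia.
  - by rewrite mul0r; lia.
have e := gmin _ (ezs_ker i sg) (@ezs_nz i sg hsg) hc.
have ez j : (j == i)%:R * sg = u (izI j) 0 - v (izI j) 0.
  by rewrite -gE -e /ezs /delta mkv_z mxE.
exists i; split => //.
- by have := ez i; rewrite eqxx mul1r => <-.
- by move=> j nji; have := ez j; rewrite (negbTE nji) mul0r; lia.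
Qed.
End Fiber.

End Mat.

Lemma card_cnt (T : finType) (P : pred T) : #|[set i | P i]| = count P (enum T).
Proof.
rewrite cardsE cardE -size_filter; congr size; rewrite {1}/enum_mem -enumT.
by apply: eq_filter.
Qed.

Lemma nth_cat1 k (f g : 'I_k -> nat) (i : 'I_k) :
  nth 0%N (map f (enum 'I_k) ++ map g (enum 'I_k)) i = f i.
Proof. by rewrite nth_cat size_map (size_enumI k) ltn_ord nth_map_enum. Qed.

Lemma nth_cat2 k (f g : 'I_k -> nat) (i : 'I_k) :
  nth 0%N (map f (enum 'I_k) ++ map g (enum 'I_k)) (k + i) = g i.
Proof.
rewrite nth_cat size_map (size_enumI k) ltnNge leq_addr /= addKn.
exact: nth_map_enum.
Qed.

Lemma nin_ge k (w : 'cV[int]_k) i : - w i 0 <= neg_inf_norm w /\ 0 <= neg_inf_norm w.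
Proof.
rewrite /neg_inf_norm.
have : i \in index_enum 'I_k by rewrite mem_index_enum.
elim: (index_enum 'I_k) => [|a r IH] //.
rewrite in_cons big_cons => /orP[/eqP <-|ir].
  by rewrite !le_max lexx !orbT.
have [h1 h2] := IH ir; by rewrite !le_max h1 h2 !orbT.
Qed.

Lemma nin_ge0 k (w : 'cV[int]_k) : 0 <= neg_inf_norm w.
Proof.
rewrite /neg_inf_norm; elim: (index_enum 'I_k) => [|b r IH']; rewrite ?big_nil ?big_cons //.
by rewrite !le_max lexx !orbT.
Qed.

Section Assembly.
Variables (k : nat) (w1 w2 : 'cV[int]_k) (c s : int).
Hypotheses (s0 : 0 <= s) (cs0 : 0 <= c - s)
  (hw1 : forall i, 0 <= w1 i 0 + s) (hw2 : forall i, 0 <= w2 i 0 + (c - s)).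

Local Notation V := (C_s w1 w2 c s).

Definition phi (u : 'cV[int]_(k + k + k + k + 1 + 1)) : seq nat :=
  map (fun i => `|(u (ixI i) 0)%R|%N) (enum 'I_k) ++ map (fun i => `|(u (izI i) 0)%R|%N) (enum 'I_k).
Definition Ls : seq nat :=
  map (fun i => `|(w1 i 0 + s)%R|%N) (enum 'I_k) ++ map (fun i => `|(w2 i 0 + (c - s))%R|%N) (enum 'I_k).
Definition psi (x : seq nat) : 'cV[int]_(k + k + k + k + 1 + 1) :=
  mkv (\col_i ((nth 0%N x i)%:Z)) (\col_i (w1 i 0 + s - (nth 0%N x i)%:Z))
      (\col_i ((nth 0%N x (k + i))%:Z)) (\col_i (w2 i 0 + (c - s) - (nth 0%N x (k + i))%:Z))
      s (c - s).

Lemma size_Ls : size Ls = (k + k)%N.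
Proof. by rewrite /Ls size_cat 2!size_map (size_enumI k). Qed.

Lemma h1 u : V u -> inbox Ls (phi u).
Proof.
case/CsP => // _ _ hx hz.
rewrite inbox_cat ?size_map // !inbox_map; apply/andP; split; apply/allP => i _.
  by case: (hx i) => *; have := hw1 i; lia.
by case: (hz i) => *; have := hw2 i; lia.
Qed.

Lemma h2 x : inbox Ls x -> V (psi x).
Proof.
move=> hx; apply/CsP => //; split; rewrite /psi ?mkv_p ?mkv_q // => i.
  rewrite mkv_x mkv_y !mxE; have := inbox_nth i hx; rewrite /Ls nth_cat1.
  by have := hw1 i; move=> *; split; lia.
rewrite mkv_z mkv_t !mxE; have := inbox_nth (k + i) hx; rewrite /Ls nth_cat2.
by have := hw2 i; move=> *; split; lia.
Qed.

Lemma h3 x : inbox Ls x -> phi (psi x) = x.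
Proof.
move=> hx; have sx := inbox_size hx; rewrite size_Ls in sx.
rewrite /phi.
have -> : map (fun i => `|(psi x (ixI i) 0)%R|%N) (enum 'I_k) =
          map (fun i : 'I_k => nth 0%N x (0 + i)) (enum 'I_k).
  by apply: eq_map => i; rewrite /psi mkv_x mxE.
have -> : map (fun i => `|(psi x (izI i) 0)%R|%N) (enum 'I_k) =
          map (fun i : 'I_k => nth 0%N x (k + i)) (enum 'I_k).
  by apply: eq_map => i; rewrite /psi mkv_z mxE.
rewrite !map_nth_enum ?sx ?leq_addr // drop0 [take k (drop k x)]take_oversize ?cat_take_drop //.
by rewrite size_drop sx addnK.
Qed.

Lemma h4 u : V u -> psi (phi u) = u.
Proof.
case/CsP => // pu qu hx hz.
apply: vecP => [i|i|i|i||]; rewrite /psi ?mkv_x ?mkv_y ?mkv_z ?mkv_t ?mkv_p ?mkv_q ?mxE /phi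
  ?nth_cat1 ?nth_cat2 //.
- by case: (hx i) => *; lia.
- by case: (hx i) => *; lia.
- by case: (hz i) => *; lia.
- by case: (hz i) => *; lia.
Qed.

Lemma subE (u v : 'cV[int]_(k + k + k + k + 1 + 1)) idx : (u - v) idx 0 = u idx 0 - v idx 0.
Proof. by rewrite !mxE. Qed.

Lemma diff_exs u v i : V u -> V v -> u (ixI i) 0 = v (ixI i) 0 + 1 ->
  (forall j, j != i -> u (ixI j) 0 = v (ixI j) 0) -> (forall j, u (izI j) 0 = v (izI j) 0) ->
  u - v = exs i 1.
Proof.
case/CsP => // pu qu xu zu; case/CsP => // pv qv xv zv ei oth eqz.
apply: vecP => [j|j|j|j||]; rewrite subE /exs /delta ?mkv_x ?mkv_y ?mkv_z ?mkv_t ?mkv_p ?mkv_q ?mxE.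
- case: (eqVneq j i) => [->|nj] /=; rewrite ?mulr1 ?mul0r ?mulr1n; first lia.
  by rewrite oth // subrr.
- case: (xu j) => _ _ e1; case: (xv j) => _ _ e2.
  case: (eqVneq j i) => [ej|nj] /=; rewrite ?mulr1 ?mul0r ?mulr1n; first by subst j; lia.
  by have := oth j nj; lia.
- by rewrite eqz subrr.
- by case: (zu j) => _ _ e1; case: (zv j) => _ _ e2; have := eqz j; lia.
- lia.
- lia.
Qed.

Lemma diff_ezs u v i : V u -> V v -> u (izI i) 0 = v (izI i) 0 + 1 ->
  (forall j, j != i -> u (izI j) 0 = v (izI j) 0) -> (forall j, u (ixI j) 0 = v (ixI j) 0) ->
  u - v = ezs i 1.
Proof.
case/CsP => // pu qu xu zu; case/CsP => // pv qv xv zv ei oth eqx.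
apply: vecP => [j|j|j|j||]; rewrite subE /ezs /delta ?mkv_x ?mkv_y ?mkv_z ?mkv_t ?mkv_p ?mkv_q ?mxE.
- by rewrite eqx subrr.
- by case: (xu j) => _ _ e1; case: (xv j) => _ _ e2; have := eqx j; lia.
- case: (eqVneq j i) => [->|nj] /=; rewrite ?mulr1 ?mul0r ?mulr1n; first lia.
  by rewrite oth // subrr.
- case: (zu j) => _ _ e1; case: (zv j) => _ _ e2.
  case: (eqVneq j i) => [ej|nj] /=; rewrite ?mulr1 ?mul0r ?mulr1n; first by subst j; lia.
  by have := oth j nj; lia.
- lia.
- lia.
Qed.

Lemma dir u v : V u -> V v -> in_graver (A_mat k) (u - v) -> adjb (phi u) (phi v).
Proof.
move=> Vu Vv G.
case/CsP: (Vu) => // _ _ xu zu; case/CsP: (Vv) => // _ _ xv zv.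
have [[i [hi oth eqz]]|[i [hi oth eqx]]] := graver_char s0 cs0 Vu Vv G;
  rewrite /phi adjb_cat ?size_map //; apply/orP; [left|right]; apply/andP; split.
- apply/adjb_map; first exact: enum_uniq.
  exists i; split; first by rewrite mem_enum.
    by case: (xu i) => *; case: (xv i) => *; lia.
  by move=> j _ nj; rewrite oth.
- by rewrite eq_map_in; apply/allP => j _; rewrite eqz.
- by rewrite eq_map_in; apply/allP => j _; rewrite eqx.
- apply/adjb_map; first exact: enum_uniq.
  exists i; split; first by rewrite mem_enum.
    by case: (zu i) => *; case: (zv i) => *; lia.
  by move=> j _ nj; rewrite oth.
Qed.

Lemma h5 u v : V u -> V v ->
  (fiber_adj (in_graver (A_mat k)) u v <-> adjb (phi u) (phi v)).
Proof.
move=> Vu Vv; split.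
  case=> _ [G|G]; first exact: dir.
  by rewrite adjbC; apply: dir => //; rewrite -opprB.
move=> H; have nuv : u <> v by move=> e; move: H; rewrite e adjb_irr.
split => //.
case/CsP: (Vu) => // _ _ xu zu; case/CsP: (Vv) => // _ _ xv zv.
move: H; rewrite /phi adjb_cat ?size_map // => /orP[/andP[H1 H2]|/andP[H1 H2]].
- case/adjb_map: H1 => [|i [_ st oth]]; first exact: enum_uniq.
  move: H2; rewrite eq_map_in => /allP eqz.
  have oth' j : j != i -> u (ixI j) 0 = v (ixI j) 0.
    move=> nj; have := oth j (mem_enum _ j) nj.
    by case: (xu j) => *; case: (xv j) => *; lia.
  have eqz' j : u (izI j) 0 = v (izI j) 0.
    have := eqz j (mem_enum _ j); move/eqP.
    by case: (zu j) => *; case: (zv j) => *; lia.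
  case/orP: st => st.
    left; rewrite (@diff_exs u v i Vu Vv) //; first by apply: (graver_exs s0 cs0); rewrite normr1.
    by move: st; case: (xu i) => *; case: (xv i) => *; lia.
  right; rewrite opprB (@diff_exs v u i Vv Vu) //; first by apply: (graver_exs s0 cs0); rewrite normr1.
  - by move: st; case: (xu i) => *; case: (xv i) => *; lia.
  - by move=> j nj; rewrite oth'.
- case/adjb_map: H2 => [|i [_ st oth]]; first exact: enum_uniq.
  move: H1; rewrite eq_map_in => /allP eqx.
  have oth' j : j != i -> u (izI j) 0 = v (izI j) 0.
    move=> nj; have := oth j (mem_enum _ j) nj.
    by case: (zu j) => *; case: (zv j) => *; lia.
  have eqx' j : u (ixI j) 0 = v (ixI j) 0.
    have := eqx j (mem_enum _ j); move/eqP.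
    by case: (xu j) => *; case: (xv j) => *; lia.
  case/orP: st => st.
    left; rewrite (@diff_ezs u v i Vu Vv) //; first by apply: (graver_ezs s0 cs0); rewrite normr1.
    by move: st; case: (zu i) => *; case: (zv i) => *; lia.
  right; rewrite opprB (@diff_ezs v u i Vv Vu) //; first by apply: (graver_ezs s0 cs0); rewrite normr1.
  - by move: st; case: (zu i) => *; case: (zv i) => *; lia.
  - by move=> j nj; rewrite oth'.
Qed.

Lemma assembled : min_degree_eq V (fiber_adj (in_graver (A_mat k))) (dd Ls) /\ vconnectivity_eq V (fiber_adj (in_graver (A_mat k))) (dd Ls).
Proof. exact: (transfer h1 h2 h3 h4 h5). Qed.

Lemma dd_Ls : dd Ls = (supp_size w1 s + supp_size w2 (c - s))%N.
Proof.
rewrite /dd /Ls count_cat 2!count_map /supp_size !card_cnt.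
have e1 : count (preim (fun i : 'I_k => `|(w1 i 0 + s)%R|%N) [eta leq 1]) (enum 'I_k) =
  count (fun i : 'I_k => (w1 i 0 + s)%R != 0) (enum 'I_k) by apply: eq_count => i /=; lia.
have e2 : count (preim (fun i : 'I_k => `|(w2 i 0 + (c - s))%R|%N) [eta leq 1]) (enum 'I_k) =
  count (fun i : 'I_k => (w2 i 0 + (c - s))%R != 0) (enum 'I_k) by apply: eq_count => i /=; lia.
by rewrite e1 e2.
Qed.
End Assembly.


Theorem lemma6 (k : nat) (hk : (1 <= k)%N) (w1 w2 : 'cV[int]_k) (c : int)
  (hne : exists u, in_fiber (A_mat k) (b_vec w1 w2 c) u)
  (s : int) (hs : l_b w1 <= s <= u_b w2 c) :
  min_degree_eq (C_s w1 w2 c s) (fiber_adj (in_graver (A_mat k)))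
    (supp_size w1 s + supp_size w2 (c - s))%N /\
  vconnectivity_eq (C_s w1 w2 c s) (fiber_adj (in_graver (A_mat k)))
    (supp_size w1 s + supp_size w2 (c - s))%N.
Proof.
case/andP: hs; rewrite /l_b /u_b => hl hu.
have n1 := nin_ge0 w1; have n2 := nin_ge0 w2.
have s0 : 0 <= s by lia.
have cs0 : 0 <= c - s by lia.
have hw1 i : 0 <= w1 i 0 + s by case: (nin_ge w1 i) => *; lia.
have hw2 i : 0 <= w2 i 0 + (c - s) by case: (nin_ge w2 i) => *; lia.
rewrite -(dd_Ls w1 w2 s0 cs0).
exact: (assembled s0 cs0 hw1 hw2).
Qed.
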